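(* For every set $P$ of $n\ge 2$ points in the plane in general position, the graph $G_\bigtriangledown(P)$ contains a matching of size at least $\left\lceil\frac{n-2}{3}\right\rceil$.
   Context: A finite point set $P$ in the plane is in general position if no line through two points of $P$ makes an angle of $0^\circ$, $60^\circ$ or $120^\circ$ with the horizontal. A down-triangle is an equilateral triangle with one side parallel to the $x$-axis and the corner opposite to this side below that side. $G_\bigtriangledown(P)$ is the graph with vertex set $P$ in which $p,q$ are adjacent iff some (closed) down-triangle contains $p$ and $q$ and no other point of $P$. A matching is a set of pairwise vertex-disjoint edges. *)

(* Defs.v *)
From Stdlib Require Import Reals List Arith.
Import ListNotations.
Open Scope R_scope.

Definition point := (R * R)%type.

(* General position: no line through two distinct points of P makes an angle
   of 0, 60 or 120 degrees with the horizontal, i.e. the direction q - p is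
   not parallel to (1,0), (1,sqrt 3) or (1,-sqrt 3). *)
Definition general_position (P : list point) : Prop :=
  forall p q, In p P -> In q P -> p <> q ->
    snd q - snd p <> 0 /\
    snd q - snd p <> sqrt 3 * (fst q - fst p) /\
    snd q - snd p <> - sqrt 3 * (fst q - fst p).

(* A down-triangle, given by the left endpoint (a, c) of its horizontal top
   side and its side length s > 0; its vertices are (a, c), (a + s, c) and
   the apex (a + s/2, c - s * sqrt 3 / 2) below the top side. *)
Record down_triangle := DownTri { dt_a : R; dt_c : R; dt_s : R }.

Definition in_dt (T : down_triangle) (r : point) : Prop :=
  snd r <= dt_c T /\
  0 <= sqrt 3 * (fst r - dt_a T) + (snd r - dt_c T) /\
  0 <= sqrt 3 * (dt_a T + dt_s T - fst r) + (snd r - dt_c T).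

Definition Gdown_adj (P : list point) (p q : point) : Prop :=
  p <> q /\
  exists T : down_triangle, 0 < dt_s T /\ in_dt T p /\ in_dt T q /\
    forall r, In r P -> in_dt T r -> r = p \/ r = q.

Definition endpoints (M : list (point * point)) : list point :=
  flat_map (fun e => [fst e; snd e]) M.

Definition is_matching (P : list point) (M : list (point * point)) : Prop :=
  (forall e, In e M -> In (fst e) P /\ In (snd e) P /\ Gdown_adj P (fst e) (snd e)) /\
  NoDup (endpoints M).

Definition ceil_div (a b : nat) : nat := ((a + b - 1) / b)%nat.

(* Main.v *)
Require Import Defs.
From Stdlib Require Import Reals List Arith Lra Lia Permutation Sorted Classical.
Import ListNotations.
Open Scope R_scope.

Definition s3 := sqrt 3.
Lemma s3_pos : 0 < s3.
Proof. unfold s3. apply sqrt_lt_R0. lra. Qed.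
Lemma s3_neq : s3 <> 0.
Proof. generalize s3_pos; lra. Qed.

Definition al (p : point) := s3 * fst p + snd p.
Definition be (p : point) := - s3 * fst p + snd p.
Lemma al_be p : al p + be p = 2 * snd p.
Proof. unfold al, be. ring. Qed.

Definition maxl (S : list point) m := forall r, In r S -> ~ (al m < al r /\ be m < be r).

Definition madj (S : list point) (p q : point) : Prop :=
  p <> q /\ exists A B C, A <= al p /\ A <= al q /\ B <= be p /\ B <= be q /\
   snd p <= C /\ snd q <= C /\ (C = snd p \/ C = snd q) /\ A + B < 2 * C /\
   forall r, In r S -> A <= al r -> B <= be r -> snd r <= C -> r = p \/ r = q.

Lemma in_dt_iff A B C r :
  in_dt (DownTri ((A - C) / s3) C ((2 * C - A - B) / s3)) r <->
  (snd r <= C /\ A <= al r /\ B <= be r).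
Proof.
  assert (E1 : s3 * (fst r - (A - C) / s3) + (snd r - C) = al r - A).
  { unfold al. field. apply s3_neq. }
  assert (E2 : s3 * ((A - C) / s3 + (2 * C - A - B) / s3 - fst r) + (snd r - C) = be r - B).
  { unfold be. field. apply s3_neq. }
  unfold in_dt; simpl. fold s3. rewrite E1, E2. split; intros (?&?&?); repeat split; lra.
Qed.

Lemma madj_Gdown S p q : madj S p q -> Gdown_adj S p q.
Proof.
  intros [Hne (A & B & C & H1 & H2 & H3 & H4 & H5 & H6 & H7 & H8 & H9)].
  split; [exact Hne|].
  exists (DownTri ((A - C) / s3) C ((2 * C - A - B) / s3)).
  split; [|split; [|split]].
  - simpl. unfold Rdiv. apply Rmult_lt_0_compat; [lra|]. apply Rinv_0_lt_compat, s3_pos.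
  - apply in_dt_iff; repeat split; lra.
  - apply in_dt_iff; repeat split; lra.
  - intros r Hr Hin. apply in_dt_iff in Hin as (?&?&?). apply H9; auto.
Qed.

Lemma madj_lift S S' p q : madj S p q ->
  (forall r, In r S' -> In r S \/ (snd p < snd r /\ snd q < snd r)) -> madj S' p q.
Proof.
  intros [Hne (A & B & C & H1 & H2 & H3 & H4 & H5 & H6 & H7 & H8 & H9)] HS.
  split; [exact Hne|]. exists A, B, C. repeat split; auto.
  intros r Hr Ha Hb Hc. destruct (HS r Hr) as [Hr'|[]].
  - apply H9; auto.
  - exfalso. destruct H7; lra.
Qed.

Definition gp' (S : list point) := forall p q, In p S -> In q S -> p <> q ->
  snd p <> snd q /\ al p <> al q /\ be p <> be q.

Lemma gp_of S : general_position S -> gp' S.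
Proof.
  intros H p q Hp Hq Hne. destruct (H p q Hp Hq Hne) as (H1&H2&H3).
  unfold al, be, s3 in *. repeat split; intro E.
  - apply H1. lra.
  - apply H3. lra.
  - apply H2. lra.
Qed.

Lemma gp_incl S S' : gp' S -> incl S' S -> gp' S'.
Proof. intros H Hi p q Hp Hq. apply H; auto. Qed.
Inductive forest := FNil | FCons (x : point) (ch r : forest).

Fixpoint labels f := match f with FNil => [] | FCons x ch r => x :: labels ch ++ labels r end.
Fixpoint roots f := match f with FNil => [] | FCons x _ r => x :: roots r end.
Definition froot f := match f with FNil => None | FCons x _ _ => Some x end.

Fixpoint valid (E : point -> point -> Prop) f := match f with
  | FNil => True
  | FCons x ch r => valid E ch /\ valid E r /\ (forall y, froot ch = Some y -> E x y)
      /\ (forall y, froot r = Some y -> E x y) end.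

Lemma froot_in f y : froot f = Some y -> In y (labels f).
Proof. destruct f; simpl; intro H; inversion H; auto. Qed.

Lemma roots_labels f : incl (roots f) (labels f).
Proof.
  induction f as [|x ch _ r IHr]; simpl; intros z Hz; [destruct Hz|].
  destruct Hz as [->|Hz]; [left; reflexivity|]. right. apply in_or_app. right. auto.
Qed.

Lemma valid_lift (E E' : point -> point -> Prop) f : valid E f ->
  (forall x y, In x (labels f) -> In y (labels f) -> E x y -> E' x y) -> valid E' f.
Proof.
  induction f as [|x ch IHch r IHr]; simpl; auto.
  intros (H1&H2&H3&H4) HE. repeat split.
  - apply IHch; auto. intros a b Ha Hb. apply HE; right; apply in_or_app; auto.
  - apply IHr; auto. intros a b Ha Hb. apply HE; right; apply in_or_app; auto.
  - intros y Hy. apply HE; auto. right; apply in_or_app; left; apply froot_in; auto.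
  - intros y Hy. apply HE; auto. right; apply in_or_app; right; apply froot_in; auto.
Qed.

Lemma endpoints_app M1 M2 : endpoints (M1 ++ M2) = endpoints M1 ++ endpoints M2.
Proof. unfold endpoints. apply flat_map_app. Qed.

Lemma length_labels_fcons x ch r : length (labels (FCons x ch r)) = S (length (labels ch) + length (labels r)).
Proof. simpl. rewrite length_app. reflexivity. Qed.

Definition goodM (E : point -> point -> Prop) (L : list point) (M : list (point*point)) :=
  (forall e, In e M -> E (fst e) (snd e)) /\ NoDup (endpoints M) /\ incl (endpoints M) L.

Lemma goodM_app E L1 L2 M1 M2 : goodM E L1 M1 -> goodM E L2 M2 ->
  (forall a, In a L1 -> ~ In a L2) -> goodM E (L1 ++ L2) (M1 ++ M2).
Proof.
  intros (H1&H2&H3) (H4&H5&H6) Hd. split; [|split].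
  - intros e He. apply in_app_or in He as [He|He]; auto.
  - rewrite endpoints_app. apply NoDup_app; auto.
    intros a Ha1 Ha2. apply (Hd a); auto.
  - rewrite endpoints_app. intros a Ha. apply in_app_or in Ha as [Ha|Ha]; apply in_or_app; auto.
Qed.

Lemma goodM_cons E L M x y : goodM E L M -> E x y -> x <> y -> ~ In x L -> ~ In y (endpoints M) ->
  In y L -> goodM E (x :: L) ((x,y) :: M).
Proof.
  intros (H1&H2&H3) Hxy Hne HxL HyM HyL. split; [|split].
  - intros e [<-|He]; auto.
  - simpl. constructor.
    + intros [E1|E1]; [congruence|]. apply HxL, H3; auto.
    + constructor; auto.
  - intros a [<-|[<-|Ha]]; simpl; auto.
Qed.

Lemma goodM_mono E L L' M : goodM E L M -> incl L L' -> goodM E L' M.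
Proof. intros (?&?&?) ?. split; [|split]; auto. eapply incl_tran; eauto. Qed.

Ltac nlia := repeat match goal with H : ?v = FCons _ _ _ |- _ => subst v | H : ?v = FNil |- _ => subst v end; simpl labels in *; simpl length in *; repeat rewrite length_app in *; simpl length in *; lia.

Lemma forest_matching E f : valid E f -> NoDup (labels f) ->
  (exists M, goodM E (labels f) M /\ (length (labels f) <= 3 * length M + 1)%nat) /\
  (exists M, goodM E (labels f) M /\ (forall x, froot f = Some x -> ~ In x (endpoints M)) /\
      (length (labels f) <= 3 * length M + 3)%nat).
Proof.
  induction f as [|x ch IHch r IHr].
  - intros _ _. split; exists []; simpl; repeat split; auto; try (intros ? []); try constructor; lia.
  - intros (Vch&Vr&Ech&Er) ND. simpl in ND.
    apply NoDup_cons_iff in ND as [Hx ND].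
    pose proof (NoDup_app_remove_r _ _ ND) as NDch.
    pose proof (NoDup_app_remove_l _ _ ND) as NDr.
    assert (Disj : forall a, In a (labels ch) -> ~ In a (labels r)).
    { intros a Ha1 Ha2. clear -ND Ha1 Ha2. induction (labels ch) as [|b l IH]; [destruct Ha1|].
      simpl in ND. apply NoDup_cons_iff in ND as [Hb ND]. destruct Ha1 as [->|Ha1].
      - apply Hb, in_or_app; auto.
      - apply IH; auto. }
    destruct (IHch Vch NDch) as [(Bc&GBc&LBc) (Ac&GAc&FAc&LAc)].
    destruct (IHr Vr NDr) as [(Br&GBr&LBr) (Ar&GAr&FAr&LAr)].
    rewrite length_labels_fcons.
    assert (GA : goodM E (labels (FCons x ch r)) (Bc ++ Br)).
    { eapply goodM_mono; [apply goodM_app; eauto|]. intros a Ha; simpl; auto. }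
    assert (HxA : ~ In x (endpoints (Bc ++ Br))).
    { intro Hin. apply Hx. destruct GA as (_&_&Hi). destruct GBc as (_&_&Hc). destruct GBr as (_&_&Hr).
      rewrite endpoints_app in Hin. apply in_app_or in Hin as [Hin|Hin]; apply in_or_app; auto. }
    split.
    2:{ exists (Bc ++ Br). split; [exact GA|]. split.
        - simpl. intros y Hy. inversion Hy; subst. exact HxA.
        - rewrite length_app. lia. }
    destruct (le_dec (S (length (labels ch) + length (labels r))) (3 * length (Bc ++ Br) + 1)) as [Hle|Hle].
    { exists (Bc ++ Br). split; auto. }
    rewrite length_app in Hle.
    destruct ch as [|y chc chr] eqn:Ech'.
    +
      destruct r as [|z rc rr] eqn:Er'.
      * exfalso. simpl in Hle. lia.
      * assert (Hz : froot r = Some z) by (subst; reflexivity).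
        exists ((x, z) :: Ar ++ Bc). split.
        -- rewrite <- Ech', <- Er' in *.
           assert (G2 : goodM E (labels r ++ labels ch) (Ar ++ Bc)).
           { apply goodM_app; auto. intros a Ha1 Ha2. apply (Disj a); auto. }
           apply goodM_mono with (L := x :: labels r ++ labels ch).
           ++ apply goodM_cons; [exact G2| apply Er; exact Hz | | | | ].
              ** intro; subst. apply Hx, in_or_app; right. apply froot_in; auto.
              ** intro H. apply Hx. apply in_app_or in H as [H|H]; apply in_or_app; auto.
              ** rewrite endpoints_app. intro H. apply in_app_or in H as [H|H].
                 --- apply (FAr z); auto.
                 --- destruct GBc as (_&_&Hc). apply (Disj z); [apply Hc; auto| apply froot_in; auto].
              ** apply in_or_app; left; apply froot_in; auto.
           ++ intros a [<-|Ha]; [left; auto|right]. apply in_app_or in Ha as [Ha|Ha]; apply in_or_app; auto.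
        -- nlia.
    + assert (Hy : froot ch = Some y) by (subst; reflexivity).
      destruct (le_dec (S (length (labels ch) + length (labels r))) (3 * S (length Ac + length Br) + 1)) as [H1|H1].
      * exists ((x, y) :: Ac ++ Br). split.
        -- rewrite <- Ech' in *.
           assert (G2 : goodM E (labels ch ++ labels r) (Ac ++ Br)).
           { apply goodM_app; auto. }
           apply goodM_cons; [exact G2| apply Ech; exact Hy | | | | ].
           ++ intro; subst. apply Hx, in_or_app; left. apply froot_in; auto.
           ++ exact Hx.
           ++ rewrite endpoints_app. intro H. apply in_app_or in H as [H|H].
              --- apply (FAc y); auto.
              --- destruct GBr as (_&_&Hr). apply (Disj y); [apply froot_in; auto| apply Hr; auto].
           ++ apply in_or_app; left; apply froot_in; auto.
        -- nlia.
      * destruct r as [|z rc rr] eqn:Er'.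
        -- exfalso. nlia.
        -- assert (Hz : froot r = Some z) by (subst; reflexivity).
           exists ((x, z) :: Ar ++ Bc). split.
           ++ rewrite <- Ech', <- Er' in *.
              assert (G2 : goodM E (labels r ++ labels ch) (Ar ++ Bc)).
              { apply goodM_app; auto. intros a Ha1 Ha2. apply (Disj a); auto. }
              apply goodM_mono with (L := x :: labels r ++ labels ch).
              ** apply goodM_cons; [exact G2| apply Er; exact Hz | | | | ].
                 --- intro; subst. apply Hx, in_or_app; right. apply froot_in; auto.
                 --- intro H. apply Hx. apply in_app_or in H as [H|H]; apply in_or_app; auto.
                 --- rewrite endpoints_app. intro H. apply in_app_or in H as [H|H].
                     +++ apply (FAr z); auto.
                     +++ destruct GBc as (_&_&Hc). apply (Disj z); [apply Hc; auto| apply froot_in; auto].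
                 --- apply in_or_app; left; apply froot_in; auto.
              ** intros a [<-|Ha]; [left; auto|right]. apply in_app_or in Ha as [Ha|Ha]; apply in_or_app; auto.
           ++ nlia.
Qed.

Fixpoint treesok (E : point -> point -> Prop) f := match f with
  | FNil => True
  | FCons x ch r => valid E ch /\ (forall y, froot ch = Some y -> E x y) /\ treesok E r end.

Fixpoint chain (E : point -> point -> Prop) (l : list point) : Prop := match l with
  | [] => True
  | x :: l' => match l' with [] => True | y :: _ => E x y end /\ chain E l' end.

Lemma valid_iff E f : valid E f <-> treesok E f /\ chain E (roots f).
Proof.
  induction f as [|x ch IHch r IHr]; simpl; [tauto|].
  rewrite IHr.
  assert (HB : (forall y, froot r = Some y -> E x y) <->
     match roots r with [] => True | y :: _ => E x y end).
  { destruct r; simpl; split; auto.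
    - intros H y Hy; discriminate.
    - intros H y Hy; inversion Hy; subst; auto. }
  rewrite HB. tauto.
Qed.

Fixpoint fapp f g := match f with FNil => g | FCons x ch r => FCons x ch (fapp r g) end.

Lemma roots_fapp f g : roots (fapp f g) = roots f ++ roots g.
Proof. induction f; simpl; congruence. Qed.

Lemma labels_fapp f g : labels (fapp f g) = labels f ++ labels g.
Proof. induction f; simpl; auto. rewrite IHf2. rewrite app_assoc. reflexivity. Qed.

Lemma treesok_fapp E f g : treesok E (fapp f g) <-> treesok E f /\ treesok E g.
Proof. induction f; simpl; [tauto|]. rewrite IHf2. tauto. Qed.

Lemma chain_app E l1 l2 : chain E (l1 ++ l2) -> chain E l1 /\ chain E l2.
Proof.
  induction l1 as [|a l1 IH]; simpl; [tauto|].
  intros [H1 H2]. destruct (IH H2) as [H3 H4]. split; auto.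
  split; auto. destruct l1; simpl; auto.
Qed.

Lemma froot_roots f y : froot f = Some y -> In y (roots f).
Proof. destruct f; simpl; intro H; inversion H; auto. Qed.

Lemma SS_app (Rl : point -> point -> Prop) l1 l2 :
  StronglySorted Rl (l1 ++ l2) <->
  StronglySorted Rl l1 /\ StronglySorted Rl l2 /\ (forall x y, In x l1 -> In y l2 -> Rl x y).
Proof.
  induction l1 as [|a l1 IH]; simpl.
  - split; [intros H; repeat split; auto; [constructor|intros ? ? []]|tauto].
  - split.
    + intros H. apply StronglySorted_inv in H as [H1 H2]. apply IH in H1 as (H3&H4&H5).
      rewrite Forall_forall in H2. repeat split; auto.
      * constructor; auto. rewrite Forall_forall. intros x Hx. apply H2, in_or_app; auto.
      * intros x y [<-|Hx] Hy; auto. apply H2, in_or_app; auto.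
    + intros (H1&H2&H3). apply StronglySorted_inv in H1 as [H4 H5].
      constructor.
      * apply IH. repeat split; auto.
      * rewrite Forall_forall in *. intros x Hx. apply in_app_or in Hx as [Hx|Hx]; auto.
Qed.

Definition rel (x y : point) := al x < al y /\ be y < be x.

Lemma max_exists (Q : point -> Prop) l : (exists z, In z l /\ Q z) ->
  exists m, In m l /\ Q m /\ forall z, In z l -> Q z -> snd z <= snd m.
Proof.
  induction l as [|a l IH]; intros (z & Hz & HQ); [destruct Hz|].
  destruct (classic (exists z, In z l /\ Q z)) as [Hex|Hnex].
  - destruct (IH Hex) as (m & Hm & HQm & Hmax).
    destruct (classic (Q a)) as [HQa|HQa].
    + destruct (Rle_dec (snd a) (snd m)).
      * exists m. repeat split; auto; [right; auto|]. intros w [<-|Hw] HQw; auto.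
      * exists a. repeat split; auto; [left; auto|]. intros w [<-|Hw] HQw; [lra|].
        specialize (Hmax w Hw HQw). lra.
    + exists m. repeat split; auto; [right; auto|]. intros w [<-|Hw] HQw; auto. contradiction.
  - destruct Hz as [<-|Hz]; [|exfalso; apply Hnex; eauto].
    exists a. repeat split; auto; [left; auto|]. intros w [<-|Hw] HQw; [lra|].
    exfalso; apply Hnex; eauto.
Qed.

Lemma cover S r : In r S -> exists m, In m S /\ maxl S m /\ al r <= al m /\ be r <= be m.
Proof.
  intros Hr.
  destruct (max_exists (fun z => al r <= al z /\ be r <= be z) S) as (m & Hm & (H1&H2) & Hmax).
  { exists r; split; auto; split; lra. }
  exists m. repeat split; auto.
  intros w Hw [H3 H4]. assert (Hq : al r <= al w /\ be r <= be w) by (split; lra).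
  specialize (Hmax w Hw Hq). pose proof (al_be w). pose proof (al_be m). lra.
Qed.

Lemma chain_max S l : gp' S -> StronglySorted rel l ->
  (forall m, In m l <-> In m S /\ maxl S m) -> chain (madj S) l.
Proof.
  intros Hgp Hs Hl.
  assert (G : forall l' l0, l = l0 ++ l' -> chain (madj S) l').
  2:{ apply (G l []). reflexivity. }
  induction l' as [|a l' IH]; intros l0 Heq; simpl; [auto|].
  split.
  2:{ apply (IH (l0 ++ [a])). rewrite Heq, <- app_assoc. reflexivity. }
  destruct l' as [|y l'']; [auto|].
  rewrite Heq in Hs. apply SS_app in Hs as (_&Hs2&Hcross).
  apply StronglySorted_inv in Hs2 as [Hs3 Ha]. apply StronglySorted_inv in Hs3 as [_ Hy].
  rewrite Forall_forall in Ha, Hy.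
  assert (Hay : rel a y) by (apply Ha; left; auto).
  assert (HaS : In a S /\ maxl S a) by (apply Hl; rewrite Heq; apply in_or_app; right; left; auto).
  assert (HyS : In y S /\ maxl S y) by (apply Hl; rewrite Heq; apply in_or_app; right; right; left; auto).
  destruct Hay as [Hay1 Hay2].
  split; [intro E; subst; lra|].
  pose proof (al_be a) as Ea. pose proof (al_be y) as Ey.
  assert (Hreg : forall r, In r S -> al a <= al r -> be y <= be r -> r = a \/ r = y).
  { intros r Hr H1 H2. destruct (cover S r Hr) as (m & Hm & Hmm & H3 & H4).
    assert (Hml : In m l) by (apply Hl; auto). rewrite Heq in Hml.
    apply in_app_or in Hml as [Hml|[Em|[Em|Hml]]]; try subst m.
    - exfalso. destruct (Hcross m a Hml (or_introl eq_refl)). lra.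
    - left. destruct (classic (r = a)) as [|Hne]; auto. exfalso.
      destruct (Hgp r a Hr Hm Hne) as (_&Hal&_). lra.
    - right. destruct (classic (r = y)) as [|Hne]; auto. exfalso.
      destruct (Hgp r y Hr Hm Hne) as (_&_&Hbe). lra.
    - exfalso. destruct (Hy m Hml). lra. }
  destruct (Rle_dec (snd a) (snd y)) as [Hle|Hle].
  - exists (al a), (be y), (snd y). repeat split; try lra.
    intros r Hr H1 H2 _. apply Hreg; auto.
  - exists (al a), (be y), (snd a). repeat split; try lra.
    intros r Hr H1 H2 _. apply Hreg; auto.
Qed.

Lemma madj_dom (P P' : list point) c b : (forall z, In z P <-> z = c \/ In z P') -> gp' P ->
  In b P' -> maxl P' b -> al b < al c -> be b < be c -> madj P c b.
Proof.
  intros HP Hgp Hb Hmax H1 H2.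
  split; [intro E; subst; lra|].
  pose proof (al_be b) as Eb. pose proof (al_be c) as Ec.
  exists (al b), (be b), (snd c). repeat split; try lra.
  intros r Hr H3 H4 _. apply HP in Hr as [->|Hr]; [left; auto|].
  right. destruct (classic (r = b)) as [|Hne]; auto. exfalso.
  assert (Hb' : In b P) by (apply HP; auto). assert (Hr' : In r P) by (apply HP; auto).
  destruct (Hgp r b Hr' Hb' Hne) as (_&Hal&Hbe).
  apply (Hmax r Hr). split; lra.
Qed.

Lemma split_forest c g : StronglySorted rel (roots g) -> (forall m, In m (roots g) -> al m <> al c) ->
  exists Fb F3, g = fapp Fb F3 /\ (forall m, In m (roots Fb) -> al m < al c) /\
    (forall m, In m (roots F3) -> al c < al m).
Proof.
  induction g as [|x ch _ r IHr]; intros Hs Hne.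
  - exists FNil, FNil. simpl. split; [reflexivity|]. split; intros m [].
  - simpl in Hs. apply StronglySorted_inv in Hs as [Hs Hx]. rewrite Forall_forall in Hx.
    destruct (Rlt_dec (al x) (al c)) as [Hlt|Hge].
    + destruct IHr as (Fb & F3 & E & H1 & H2); auto.
      { intros m Hm. apply Hne. simpl; auto. }
      exists (FCons x ch Fb), F3. simpl. rewrite E. repeat split; auto.
      intros m [<-|Hm]; auto.
    + assert (al c < al x) by (assert (al x <> al c) by (apply Hne; simpl; auto); lra).
      exists FNil, (FCons x ch r). simpl. repeat split; auto; [intros m []|].
      intros m [<-|Hm]; auto. destruct (Hx m Hm). lra.
Qed.

Lemma decomp c f : StronglySorted rel (roots f) ->
  (forall m, In m (roots f) -> al m <> al c /\ be m <> be c) ->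
  exists F1 Fb F3, f = fapp F1 (fapp Fb F3) /\ (forall m, In m (roots F1) -> be c < be m) /\
    (forall m, In m (roots Fb) -> al m < al c /\ be m < be c) /\ (forall m, In m (roots F3) -> al c < al m).
Proof.
  induction f as [|x ch _ r IHr]; intros Hs Hne.
  - exists FNil, FNil, FNil. simpl. split; [reflexivity|]. split; [intros m []|]. split; intros m [].
  - pose proof Hs as Hs0. simpl in Hs. apply StronglySorted_inv in Hs as [Hs Hx]. rewrite Forall_forall in Hx.
    destruct (Rlt_dec (be c) (be x)) as [Hlt|Hge].
    + destruct IHr as (F1 & Fb & F3 & E & H1 & H2 & H3); auto.
      { intros m Hm. apply Hne. simpl; auto. }
      exists (FCons x ch F1), Fb, F3. simpl. rewrite E.
      split; [reflexivity|]. split; [intros m [<-|Hm]; auto|]. split; auto.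
    + assert (Hxc : be x < be c) by (assert (be x <> be c) by (apply Hne; simpl; auto); lra).
      assert (Hall : forall m, In m (roots (FCons x ch r)) -> be m < be c).
      { intros m [<-|Hm]; auto. destruct (Hx m Hm). lra. }
      destruct (split_forest c (FCons x ch r)) as (Fb & F3 & E & H1 & H2); auto.
      { intros m Hm. apply Hne; auto. }
      exists FNil, Fb, F3. simpl. split; [exact E|]. split; [intros m []|]. split; auto.
      intros m Hm. split; [apply H1; auto|].
      apply Hall. rewrite E, roots_fapp. apply in_or_app; auto.
Qed.

Lemma build : forall n (P : list point), length P = n -> NoDup P -> gp' P ->
  exists f, valid (madj P) f /\ NoDup (labels f) /\ (forall z, In z (labels f) <-> In z P) /\
    StronglySorted rel (roots f) /\ (forall m, In m (roots f) <-> In m P /\ maxl P m).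
Proof.
  induction n as [|k IH]; intros P Hlen HND Hgp.
  - destruct P; [|discriminate]. exists FNil. simpl.
    split; [exact I|]. split; [constructor|]. split; [tauto|]. split; [constructor|].
    intro m; split; [intros []|intros [[] _]].
  - destruct (max_exists (fun _ => True) P) as (c & Hc & _ & Hmax).
    { destruct P as [|p P0]; [discriminate|]. exists p; simpl; auto. }
    destruct (in_split c P Hc) as (l1 & l2 & EP).
    set (P' := l1 ++ l2).
    assert (HP : forall z, In z P <-> z = c \/ In z P').
    { intro z. rewrite EP. unfold P'. rewrite !in_app_iff. simpl.
      split; intros H; destruct H as [H|[H|H]]; auto. }
    assert (HND' : NoDup P') by (unfold P'; rewrite EP in HND; eapply NoDup_remove_1; eauto).
    assert (Hc' : ~ In c P') by (unfold P'; rewrite EP in HND; eapply NoDup_remove_2; eauto).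
    assert (Hgp' : gp' P') by (apply (gp_incl P); [auto| intros z Hz; apply HP; auto]).
    assert (Hlen' : length P' = k).
    { unfold P'. rewrite EP in Hlen. rewrite length_app in *. simpl in Hlen. lia. }
    destruct (IH P' Hlen' HND' Hgp') as (f' & Hv & HNDl & Hlab & Hs & Hroots).
    assert (Htop : forall m, In m P' -> snd m < snd c /\ al m <> al c /\ be m <> be c).
    { intros m Hm. assert (Hne : m <> c) by (intro; subst; contradiction).
      assert (HmP : In m P) by (apply HP; auto).
      destruct (Hgp m c HmP Hc Hne) as (G1&G2&G3). specialize (Hmax m HmP I).
      split; [lra|]. split; auto. }
    destruct (decomp c f') as (F1 & Fb & F3 & Ef & H1 & H2 & H3); auto.
    { intros m Hm. apply Hroots in Hm as [Hm _]. destruct (Htop m Hm) as (_&?&?). auto. }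
    set (f := fapp F1 (FCons c Fb F3)).
    assert (Hrf : roots f = roots F1 ++ c :: roots F3) by (unfold f; rewrite roots_fapp; reflexivity).
    assert (Hrf' : roots f' = roots F1 ++ roots Fb ++ roots F3) by (rewrite Ef, !roots_fapp; reflexivity).
    assert (Hlf : Permutation (labels f) (c :: labels f')).
    { unfold f. rewrite Ef, !labels_fapp. simpl. symmetry. apply Permutation_middle. }
    assert (Hlabf : forall z, In z (labels f) <-> In z P).
    { intro z. split; intro Hz.
      - apply (Permutation_in _ Hlf) in Hz. destruct Hz as [Hz|Hz]; apply HP; [left; auto| right; apply Hlab; auto].
      - apply HP in Hz. apply (Permutation_in _ (Permutation_sym Hlf)).
        destruct Hz as [Hz|Hz]; [left; auto| right; apply Hlab; auto]. }
    assert (HrootsP : forall m, In m (roots f) <-> In m P /\ maxl P m).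
    { intro m. rewrite Hrf. split.
      - intro Hm. apply in_app_or in Hm as [Hm|[Em|Hm]].
        + assert (Hm' : In m (roots f')) by (rewrite Hrf'; apply in_or_app; auto).
          apply Hroots in Hm' as [HmP' Hmm]. split; [apply HP; auto|].
          intros r Hr [Ha Hb]. apply HP in Hr as [Er|Hr].
          * subst r. specialize (H1 m Hm). lra.
          * apply (Hmm r Hr); auto.
        + subst m. split; [apply HP; auto|]. intros r Hr [Ha Hb]. specialize (Hmax r Hr I).
          pose proof (al_be r); pose proof (al_be c). lra.
        + assert (Hm' : In m (roots f')) by (rewrite Hrf'; apply in_or_app; right; apply in_or_app; auto).
          apply Hroots in Hm' as [HmP' Hmm]. split; [apply HP; auto|].
          intros r Hr [Ha Hb]. apply HP in Hr as [Er|Hr].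
          * subst r. specialize (H3 m Hm). lra.
          * apply (Hmm r Hr); auto.
      - intros [HmP Hmm]. apply HP in HmP as [Em|HmP'].
        + subst m. apply in_or_app; right; left; auto.
        + assert (Hmm' : maxl P' m) by (intros r Hr; apply Hmm; apply HP; auto).
          assert (Hm' : In m (roots f')) by (apply Hroots; auto).
          rewrite Hrf' in Hm'. apply in_app_or in Hm' as [Hm'|Hm']; [apply in_or_app; left; auto|].
          apply in_app_or in Hm' as [Hm'|Hm'].
          * exfalso. destruct (H2 m Hm'). apply (Hmm c); [apply HP; auto| split; auto].
          * apply in_or_app; right; right; auto. }
    assert (Hsf : StronglySorted rel (roots f)).
    { rewrite Hrf. rewrite Hrf' in Hs. apply SS_app in Hs as (S1 & S23 & C1).
      apply SS_app in S23 as (S2 & S3 & C23).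
      apply SS_app. split; [exact S1|]. split.
      - constructor; auto. rewrite Forall_forall. intros m Hm. specialize (H3 m Hm).
        assert (Hm' : In m P') by (apply Hroots; rewrite Hrf'; apply in_or_app; right; apply in_or_app; auto).
        destruct (Htop m Hm') as (T1&_&_). pose proof (al_be m); pose proof (al_be c).
        split; lra.
      - intros x y Hx [Ey|Hy].
        + subst y. specialize (H1 x Hx).
          assert (Hx' : In x P') by (apply Hroots; rewrite Hrf'; apply in_or_app; auto).
          destruct (Htop x Hx') as (T1&_&_). pose proof (al_be x); pose proof (al_be c).
          split; lra.
        + apply C1; auto. apply in_or_app; auto. }
    assert (Hv' : valid (madj P) f').
    { apply (valid_lift (madj P')); auto. intros x y Hx Hy Hxy. apply (madj_lift P'); auto.
      intros r Hr. apply HP in Hr as [Er|Hr]; [right|left; auto].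
      subst r. apply Hlab in Hx. apply Hlab in Hy.
      destruct (Htop x Hx) as (?&_&_). destruct (Htop y Hy) as (?&_&_). lra. }
    apply valid_iff in Hv' as [T' Ch']. rewrite Ef in T'.
    apply treesok_fapp in T' as [T1 T23]. apply treesok_fapp in T23 as [Tb T3].
    rewrite Hrf' in Ch'. apply chain_app in Ch' as [_ Ch23]. apply chain_app in Ch23 as [Chb _].
    exists f. split; [|split; [|split; [|split]]]; auto.
    + apply valid_iff. split.
      * unfold f. apply treesok_fapp. split; auto. simpl. split; [apply valid_iff; auto|]. split; auto.
        intros b Hb. apply froot_roots in Hb. destruct (H2 b Hb) as [Hb1 Hb2].
        assert (Hb' : In b (roots f')) by (rewrite Hrf'; apply in_or_app; right; apply in_or_app; left; auto).
        apply Hroots in Hb' as [HbP' Hbm]. apply (madj_dom P P'); auto.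
      * apply chain_max; auto.
    + apply (Permutation_NoDup (Permutation_sym Hlf)). constructor; auto.
      intro Hin. apply Hc'. apply Hlab. auto.
Qed.

Theorem theorem2 (P : list point) (n : nat) :
  NoDup P -> length P = n -> (2 <= n)%nat -> general_position P ->
  exists M : list (point * point),
    is_matching P M /\ (ceil_div (n - 2) 3 <= length M)%nat.
Proof.
  intros HND Hlen Hn Hgp.
  destruct (build n P Hlen HND (gp_of P Hgp)) as (f & Hv & HNDl & Hlab & _ & _).
  destruct (forest_matching (madj P) f Hv HNDl) as [(M & (HE & HNDM & Hinc) & Hl) _].
  assert (Hlen' : length (labels f) = n).
  { rewrite <- Hlen. apply Permutation_length. apply NoDup_Permutation; auto. }
  exists M. split.
  - split; auto. intros e He.
    assert (Hf : In (fst e) (endpoints M)).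
    { unfold endpoints. apply in_flat_map. exists e. split; simpl; auto. }
    assert (Hs : In (snd e) (endpoints M)).
    { unfold endpoints. apply in_flat_map. exists e. split; simpl; auto. }
    split; [apply Hlab, Hinc; auto|split; [apply Hlab, Hinc; auto|]].
    apply madj_Gdown, HE; auto.
  - unfold ceil_div. replace (n - 2 + 3 - 1)%nat with n by lia.
    pose proof (Nat.Div0.mul_div_le n 3). lia.
Qed.
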